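(* Let $\lambda\in[0,\frac{\pi}{2})$ and let $\mathcal{M}=(M_1,M_2,M_3)$ be a measurement scenario with $M_1=\{A_j\}_j$, $M_2=\{B_k\}_k$, $M_3=\{C_0,\dots,C_{n-1}\}$. For $z\in\{0,1\}$ define $r_{jkl}(z):=\pi^{-1}[(A_j+B_k)-\beta(\lambda,C_l+z\pi)]\bmod 2\in[0,2)$ and the system of $\mathbb{Z}_2$-linear equations $\Psi_l(z):=\{a_j\oplus b_k=r_{jkl}(z) : \text{all } j,k \text{ with } r_{jkl}(z)\in\{0,1\}\}$ in the unknowns $a_j,b_k\in\mathbb{Z}_2$. Then $(|B(\lambda)\rangle,\mathcal{M})$ is a paradox if and only if for every $\vec z=(z_0,\dots,z_{n-1})\in\mathbb{Z}_2^n$ the system $\Psi(\vec z):=\bigcup_l\Psi_l(z_l)$ is inconsistent.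
   Context: $\oplus$ is addition mod 2. For $\varphi\in\mathbb{R}$, $E_\varphi=\cos\varphi X+\sin\varphi Y$ is the equatorial measurement, with $+1$ eigenvector $|\varphi\rangle=\frac{1}{\sqrt2}(|0\rangle+e^{i\varphi}|1\rangle)$ and $-1$ eigenvector $|\varphi+\pi\rangle$; outcomes $+1,-1$ relabelled $0,1$; measurements identified with angles. A measurement scenario $\mathcal{M}=(M_1,M_2,M_3)$ consists of finite sets $M_i\subseteq[0,\pi)$ of angles for qubit $i$; contexts are triples in $M_1\times M_2\times M_3$. For a three-qubit state $|\psi\rangle$, the event $(A,B,C)\to(a,b,c)$ is impossible if $(\langle A+a\pi|\otimes\langle B+b\pi|\otimes\langle C+c\pi|)|\psi\rangle=0$. $(|\psi\rangle,\mathcal{M})$ is a paradox if for every assignment $g$ of outcomes in $\{0,1\}$ to all measurements of $M_1,M_2,M_3$ (as disjoint sets) some context $(A,B,C)$ has $(A,B,C)\to(g(A),g(B),g(C))$ impossible. For $\lambda\in[0,\frac{\pi}{2})$, $|v_\lambda\rangle=\cos\frac{\lambda}{2}|0\rangle+\sin\frac{\lambda}{2}|1\rangle$, $|w_\lambda\rangle=\sin\frac{\lambda}{2}|0\rangle+\cos\frac{\lambda}{2}|1\rangle$, and the interpolant state is $|B(\lambda)\rangle=\frac{1}{\sqrt2}(|00\rangle|v_\lambda\rangle+|11\rangle|w_\lambda\rangle)$. Define modulo $2\pi$: $\beta(\lambda,\varphi)=\varphi-2\arctan\left(\frac{\cos\frac{\lambda}{2}\sin\varphi}{\sin\frac{\lambda}{2}+\cos\frac{\lambda}{2}\cos\varphi}\right)$.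 *)

(* Defs.v *)
From Stdlib Require Import Reals List.
From Coquelicot Require Import Coquelicot.
Import ListNotations.
Open Scope R_scope.

Definition CC := Complex.C.

Definition expi (phi : R) : CC := (cos phi, sin phi).

Definition b2R (b : bool) : R := if b then 1 else 0.

(* components of |phi> = (|0> + e^{i phi}|1>)/sqrt 2 in the computational basis *)
Definition ket (phi : R) (x : bool) : CC :=
  if x then Cmult (RtoC (/ sqrt 2)) (expi phi) else RtoC (/ sqrt 2).

Definition v_lam (lam : R) (x : bool) : CC :=
  if x then RtoC (sin (lam / 2)) else RtoC (cos (lam / 2)).
Definition w_lam (lam : R) (x : bool) : CC :=
  if x then RtoC (cos (lam / 2)) else RtoC (sin (lam / 2)).

(* |B(lambda)> = (|00>|v_lambda> + |11>|w_lambda>)/sqrt 2, as amplitudes *)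
Definition Bstate (lam : R) (x1 x2 x3 : bool) : CC :=
  match x1, x2 with
  | false, false => Cmult (RtoC (/ sqrt 2)) (v_lam lam x3)
  | true, true => Cmult (RtoC (/ sqrt 2)) (w_lam lam x3)
  | _, _ => RtoC 0
  end.

Definition bools : list bool := [false; true].

(* (<A + a pi| (x) <B + b pi| (x) <C + c pi|) |psi> *)
Definition amplitude (psi : bool -> bool -> bool -> CC)
    (A B C : R) (a b c : bool) : CC :=
  fold_right Cplus (RtoC 0)
    (flat_map (fun x1 => flat_map (fun x2 => map (fun x3 =>
       Cmult (Cmult (Cconj (ket (A + b2R a * PI) x1))
                    (Cmult (Cconj (ket (B + b2R b * PI) x2))
                           (Cconj (ket (C + b2R c * PI) x3))))
             (psi x1 x2 x3)) bools) bools) bools).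

Definition impossible (psi : bool -> bool -> bool -> CC)
    (A B C : R) (a b c : bool) : Prop :=
  amplitude psi A B C a b c = RtoC 0.

(* measurement scenario: finite sets of angles in [0, pi), given as
   duplicate-free lists *)
Definition angle_set (M : list R) : Prop :=
  NoDup M /\ forall x, In x M -> 0 <= x < PI.

(* paradox: every assignment g (to the disjoint sets M1, M2, M3) is refuted
   by some context *)
Definition paradox (psi : bool -> bool -> bool -> CC)
    (M1 M2 M3 : list R) : Prop :=
  forall g1 g2 g3 : R -> bool,
    exists A B C, In A M1 /\ In B M2 /\ In C M3 /\
      impossible psi A B C (g1 A) (g2 B) (g3 C).

(* beta(lambda, phi) = phi - 2 arctan( cos(l/2) sin phi / (sin(l/2) + cos(l/2) cos phi) ),
   modulo 2 pi.  When the denominator vanishes the arctan is taken at +-infinity,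
   i.e. 2 arctan = +-pi = pi (mod 2 pi). *)
Definition beta (lam phi : R) : R :=
  let d := sin (lam / 2) + cos (lam / 2) * cos phi in
  if Req_EM_T d 0 then phi - PI
  else phi - 2 * atan (cos (lam / 2) * sin phi / d).

Definition Rmod2 (x : R) : R := x - 2 * IZR (Int_part (x / 2)).

Definition r_coef (lam A B C : R) (z : bool) : R :=
  Rmod2 (/ PI * ((A + B) - beta lam (C + b2R z * PI))).

Definition solves_Psi (lam : R) (M1 M2 M3 : list R) (zv : nat -> bool)
    (a b : nat -> bool) : Prop :=
  forall j k l, (j < length M1)%nat -> (k < length M2)%nat -> (l < length M3)%nat ->
    let r := r_coef lam (nth j M1 0) (nth k M2 0) (nth l M3 0) (zv l) in
    (r = 0 -> xorb (a j) (b k) = false) /\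
    (r = 1 -> xorb (a j) (b k) = true).

Definition Psi_consistent (lam : R) (M1 M2 M3 : list R) (zv : nat -> bool) : Prop :=
  exists a b : nat -> bool, solves_Psi lam M1 M2 M3 zv a b.

(* Main.v *)
Require Import Defs.
From Stdlib Require Import Reals List Lra Lia Nsatz Classical.
From Coquelicot Require Import Coquelicot.
Open Scope R_scope.

Lemma half_re (c s h g : R) :
  c + s*cos(2*g) + s*cos(2*h) + c*cos(2*h+2*g) =
  2*(c*cos(h+g) + s*cos(h-g))*cos(h+g).
Proof.
  replace (2*h+2*g) with (2*(h+g)) by ring.
  rewrite !cos_2a. rewrite !cos_plus, !sin_plus, !cos_minus.
  pose proof (sin2_cos2 h) as Hh. pose proof (sin2_cos2 g) as Hg.
  unfold Rsqr in *.
  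
  set (ch := cos h) in *. set (sh := sin h) in *. set (cg := cos g) in *. set (sg := sin g) in *.
  nsatz.
Qed.

Lemma half_im (c s h g : R) :
  s*sin(2*g) + s*sin(2*h) + c*sin(2*h+2*g) =
  2*(c*cos(h+g) + s*cos(h-g))*sin(h+g).
Proof.
  replace (2*h+2*g) with (2*(h+g)) by ring.
  rewrite !sin_2a. rewrite !cos_plus, !sin_plus, !cos_minus.
  pose proof (sin2_cos2 h) as Hh. pose proof (sin2_cos2 g) as Hg.
  unfold Rsqr in *.
  
  set (ch := cos h) in *. set (sh := sin h) in *. set (cg := cos g) in *. set (sg := sin g) in *.
  nsatz.
Qed.
Lemma ortho (al ga x0 h : R) : al*cos x0 + ga*sin x0 = 0 -> (al <> 0 \/ ga <> 0) ->
  (al*cos h + ga*sin h = 0 <-> sin(h - x0) = 0).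
Proof.
  intros H0 Hn. rewrite sin_minus. split; intro H.
  - assert (E1: al * (sin h * cos x0 - cos h * sin x0) = 0).
    { replace (al * (sin h * cos x0 - cos h * sin x0)) with
        (sin h * (al*cos x0 + ga*sin x0) - sin x0 * (al*cos h + ga*sin h)) by ring.
      rewrite H0, H; ring. }
    assert (E2: ga * (sin h * cos x0 - cos h * sin x0) = 0).
    { replace (ga * (sin h * cos x0 - cos h * sin x0)) with
        (cos x0 * (al*cos h + ga*sin h) - cos h * (al*cos x0 + ga*sin x0)) by ring.
      rewrite H0, H; ring. }
    destruct Hn as [Hn|Hn]; [destruct (Rmult_integral _ _ E1)|destruct (Rmult_integral _ _ E2)]; tauto.
  - assert (E1: (al*cos h + ga*sin h) * cos x0 = 0).
    { replace ((al*cos h + ga*sin h) * cos x0) with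
        (cos h * (al*cos x0 + ga*sin x0) + ga * (sin h * cos x0 - cos h * sin x0)) by ring.
      rewrite H0, H; ring. }
    assert (E2: (al*cos h + ga*sin h) * sin x0 = 0).
    { replace ((al*cos h + ga*sin h) * sin x0) with
        (sin h * (al*cos x0 + ga*sin x0) - al * (sin h * cos x0 - cos h * sin x0)) by ring.
      rewrite H0, H; ring. }
    destruct (Rmult_integral _ _ E1); auto. destruct (Rmult_integral _ _ E2); auto.
    exfalso; apply (cos_sin_0 x0); auto.
Qed.

Lemma lam_facts lam : 0 <= lam < PI/2 ->
  0 < cos (lam/2) /\ 0 <= sin (lam/2) /\ sin (lam/2) < cos (lam/2).
Proof.
  intros [H1 H2]. pose proof PI_RGT_0.
  split; [apply cos_gt_0; lra|]. split; [apply sin_ge_0; lra|].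
  rewrite <- sin_shift. apply sin_increasing_1; lra.
Qed.

Lemma beta_t lam u : 0 <= lam < PI/2 ->
  exists t, beta lam u = u - 2*t /\
    sin t * (sin (lam/2) + cos (lam/2) * cos u) = cos t * (cos (lam/2) * sin u).
Proof.
  intros Hl. unfold beta. destruct (Req_EM_T _ 0) as [e|n].
  - exists (PI/2). split; [field|]. rewrite e, sin_PI2, cos_PI2. ring.
  - exists (atan (cos (lam / 2) * sin u / (sin (lam / 2) + cos (lam / 2) * cos u))).
    split; [ring|].
    set (y := cos (lam / 2) * sin u / (sin (lam / 2) + cos (lam / 2) * cos u)).
    pose proof (tan_atan y) as T. unfold tan in T.
    assert (cp: cos (atan y) <> 0).
    { rewrite cos_atan. apply Rgt_not_eq. apply Rdiv_lt_0_compat; [lra|].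
      apply sqrt_lt_R0. pose proof (Rle_0_sqr y). lra. }
    assert (sin (atan y) = y * cos (atan y)) as S.
    { set (a := atan y) in *. rewrite <- T. field. auto. }
    rewrite S. unfold y. field. auto.
Qed.

Lemma Q_x0 cl sl g t :
  sin t * (sl + cl * cos (2*g)) = cos t * (cl * sin (2*g)) ->
  ((cl+sl)*cos g) * cos (g - t + PI/2) + ((sl-cl)*sin g) * sin (g - t + PI/2) = 0.
Proof.
  intro H. rewrite cos_plus, sin_plus, cos_PI2, sin_PI2, cos_minus, sin_minus.
  rewrite cos_2a, sin_2a in H.
  pose proof (sin2_cos2 g) as Hg. unfold Rsqr in Hg.
  nsatz.
Qed.
Lemma Int_part_eq x n : IZR n <= x < IZR n + 1 -> Int_part x = n.
Proof. intros H. symmetry. apply Int_part_spec. lra. Qed.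

Lemma Rmod2_0 y : Rmod2 y = 0 <-> exists k, y = 2 * IZR k.
Proof.
  unfold Rmod2. split.
  - intros H. exists (Int_part (y/2)). lra.
  - intros [k ->]. rewrite (Int_part_eq (2 * IZR k / 2) k). ring.
    split; [right; field|]. replace (2 * IZR k / 2) with (IZR k) by field. lra.
Qed.

Lemma Rmod2_1 y : Rmod2 y = 1 <-> exists k, y = 2 * IZR k + 1.
Proof.
  unfold Rmod2. split.
  - intros H. exists (Int_part (y/2)). lra.
  - intros [k ->]. rewrite (Int_part_eq ((2 * IZR k + 1) / 2) k). ring.
    replace ((2 * IZR k + 1) / 2) with (IZR k + /2) by field. lra.
Qed.

Lemma fin (y : R) (a b : bool) :
  (exists k:Z, y + b2R a + b2R b - 1 = 2*IZR k) <->
  (Rmod2 y = 0 /\ xorb a b = true \/ Rmod2 y = 1 /\ xorb a b = false).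
Proof.
  rewrite Rmod2_0, Rmod2_1.
  destruct a, b; simpl; split.
  - intros [k Hk]. right. split; auto. exists (k-1)%Z. rewrite minus_IZR. simpl. lra.
  - intros [[_ H]|[[k Hk] _]]; [discriminate|]. exists (k+1)%Z. rewrite plus_IZR. simpl. lra.
  - intros [k Hk]. left. split; auto. exists k. lra.
  - intros [[[k Hk] _]|[_ H]]; [|discriminate]. exists k. lra.
  - intros [k Hk]. left. split; auto. exists k. lra.
  - intros [[[k Hk] _]|[_ H]]; [|discriminate]. exists k. lra.
  - intros [k Hk]. right. split; auto. exists k. lra.
  - intros [[_ H]|[[k Hk] _]]; [discriminate|]. exists k. lra.
Qed.
Lemma amp_eq lam A B C a b c :
  let q := / sqrt 2 in
  let A' := A + b2R a * PI in let B' := B + b2R b * PI in let u := C + b2R c * PI in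
  let cl := cos (lam/2) in let sl := sin (lam/2) in
  amplitude (Bstate lam) A B C a b c =
  (q^4 * (cl + sl * cos u + sl * cos (A'+B') + cl * cos (A'+B'+u)),
   q^4 * (-(sl * sin u + sl * sin (A'+B') + cl * sin (A'+B'+u)))).
Proof.
  intros q A' B' u cl sl.
  unfold amplitude, Bstate, ket, v_lam, w_lam, expi, bools.
  fold q A' B' u cl sl.
  simpl.
  repeat rewrite ?cos_plus, ?sin_plus.
  unfold Cplus, Cmult, Cconj, RtoC. simpl.
  apply injective_projections; simpl; ring.
Qed.

Lemma Kimp lam A B C a b c : 0 <= lam < PI/2 ->
  (impossible (Bstate lam) A B C a b c <->
   (r_coef lam A B C c = 0 /\ xorb a b = true \/ r_coef lam A B C c = 1 /\ xorb a b = false)).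
Proof.
  intros Hl. unfold impossible. rewrite amp_eq.
  destruct (lam_facts lam Hl) as [Hc [Hs Hsc]].
  destruct (beta_t lam (C + b2R c * PI) Hl) as [t [Hb Ht]].
  unfold r_coef. rewrite Hb. rewrite <- fin.
  set (cl := cos (lam/2)) in *. set (sl := sin (lam/2)) in *.
  set (u := C + b2R c * PI) in *.
  set (A' := A + b2R a * PI). set (B' := B + b2R b * PI).
  set (g := u/2). set (h := (A'+B')/2).
  assert (Eu : u = 2*g) by (unfold g; field).
  assert (EP : A'+B' = 2*h) by (unfold h; field).
  rewrite Eu in Ht.
  replace (A'+B'+u) with (2*h+2*g) by lra.
  rewrite EP, Eu.
  set (q := / sqrt 2).
  assert (qn : q <> 0).
  { unfold q. apply Rinv_neq_0_compat. apply Rgt_not_eq. apply sqrt_lt_R0. lra. }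
  rewrite half_re.
  replace (sl * sin (2 * g) + sl * sin (2 * h) + cl * sin (2 * h + 2 * g)) with
    (2 * (cl * cos (h + g) + sl * cos (h - g)) * sin (h + g)) by (symmetry; apply half_im).
  set (Q := cl * cos (h + g) + sl * cos (h - g)).
  transitivity (Q = 0).
  { unfold RtoC. split; intro H.
    - injection H as H1 H2.
      assert (q4 : q^4 <> 0) by (apply pow_nonzero; auto).
      assert (E1 : Q * cos (h+g) = 0).
      { apply (Rmult_eq_reg_l (2 * q^4)); [|apply Rmult_integral_contrapositive; split; lra]. lra. }
      assert (E2 : Q * sin (h+g) = 0).
      { apply (Rmult_eq_reg_l (- 2 * q^4)); [|apply Rmult_integral_contrapositive; split; lra]. lra. }
      destruct (Rmult_integral _ _ E1); auto. destruct (Rmult_integral _ _ E2); auto.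
      exfalso; apply (cos_sin_0 (h+g)); auto.
    - rewrite H. f_equal; ring. }
  assert (EQ : Q = ((cl+sl)*cos g) * cos h + ((sl-cl)*sin g) * sin h).
  { unfold Q. rewrite cos_plus, cos_minus. ring. }
  rewrite EQ.
  rewrite (ortho _ _ (g - t + PI/2) h).
  2: { apply Q_x0. lra. }
  2: { destruct (Req_dec (cos g) 0) as [e|n].
       - right. intro H. destruct (Rmult_integral _ _ H) as [H'|H']; [lra|].
         apply (cos_sin_0 g); auto.
       - left. intro H. destruct (Rmult_integral _ _ H) as [H'|H']; [lra|auto]. }
  pose proof PI_RGT_0 as Hpi.
  set (y := / PI * (A + B - (2 * g - 2 * t))).
  assert (Eh : h - (g - t + PI/2) = PI/2 * (y + b2R a + b2R b - 1)).
  { unfold y, h, g, A', B'. field. lra. }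
  rewrite Eh. split.
  - intros H. destruct (sin_eq_0_0 _ H) as [k Hk]. exists k.
    apply (Rmult_eq_reg_l (PI/2)); [|lra]. transitivity (IZR k * PI); [exact Hk|field].
  - intros [k Hk]. apply sin_eq_0_1. exists k. transitivity (PI/2 * (2 * IZR k)); [f_equal; exact Hk|field].
Qed.

Fixpoint idx (x : R) (l : list R) : nat :=
  match l with
  | nil => 0%nat
  | y :: l' => if Req_EM_T x y then 0%nat else S (idx x l')
  end.

Lemma idx_spec x l : In x l -> (idx x l < length l)%nat /\ nth (idx x l) l 0 = x.
Proof.
  induction l as [|y l IH]; simpl; [tauto|].
  intros H. destruct (Req_EM_T x y) as [e|n].
  - split; [lia|auto].
  - destruct H as [H|H]; [congruence|]. destruct (IH H). split; [lia|auto].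
Qed.

Theorem lemma9 (lam : R) (M1 M2 M3 : list R) :
  0 <= lam < PI / 2 ->
  angle_set M1 -> angle_set M2 -> angle_set M3 ->
  (paradox (Bstate lam) M1 M2 M3 <->
   forall zv : nat -> bool, ~ Psi_consistent lam M1 M2 M3 zv).
Proof.
  intros Hl _ _ _. split.
  - intros Hp zv [a [b Hs]].
    destruct (Hp (fun x => a (idx x M1)) (fun x => b (idx x M2)) (fun x => zv (idx x M3)))
      as [A [B [C [HA [HB [HC Him]]]]]].
    destruct (idx_spec A M1 HA) as [j1 e1].
    destruct (idx_spec B M2 HB) as [j2 e2].
    destruct (idx_spec C M3 HC) as [j3 e3].
    specialize (Hs (idx A M1) (idx B M2) (idx C M3) j1 j2 j3). cbv zeta in Hs.
    rewrite e1, e2, e3 in Hs. destruct Hs as [H0 H1].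
    apply Kimp in Him; auto.
    destruct Him as [[r x]|[r x]].
    + rewrite (H0 r) in x; discriminate.
    + rewrite (H1 r) in x; discriminate.
  - intros Hn g1 g2 g3. apply NNPP. intro Hno.
    apply (Hn (fun l => g3 (nth l M3 0))).
    exists (fun j => g1 (nth j M1 0)), (fun k => g2 (nth k M2 0)).
    intros j k l hj hk hl. cbv zeta.
    assert (Hni : ~ impossible (Bstate lam) (nth j M1 0) (nth k M2 0) (nth l M3 0)
                     (g1 (nth j M1 0)) (g2 (nth k M2 0)) (g3 (nth l M3 0))).
    { intro Hi. apply Hno. exists (nth j M1 0), (nth k M2 0), (nth l M3 0).
      repeat split; auto; apply nth_In; auto. }
    rewrite Kimp in Hni; auto.
    split; intro Hr; destruct (xorb (g1 (nth j M1 0)) (g2 (nth k M2 0))) eqn:E; auto;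
      exfalso; apply Hni; solve [left; auto | right; auto].
Qed.
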